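(* Let $G$ be a twin-free graph with $G\ne K_1$ and $G\ne K_2$. Then for every $t\ge1$, $\det(\mu_t(G))=\det(G)$ if $G$ has no isolated vertex, and $\det(\mu_t(G))=\det(G)+t-1$ otherwise.
   Context: All graphs are finite and simple. For a graph $G$ with $V(G)=\{v_1,\dots,v_n\}$ and an integer $t\ge1$, the generalized Mycielskian $\mu_t(G)$ has vertex set $\{u_i^s: 1\le i\le n,\ 0\le s\le t\}\cup\{w\}$, where $u_i^0$ is identified with $v_i$. Its edges are: $u_i^0u_j^0$ for each edge $v_iv_j$ of $G$; $u_i^su_j^{s+1}$ and $u_j^su_i^{s+1}$ for each edge $v_iv_j$ of $G$ and each $0\le s<t$; and $u_i^tw$ for all $1\le i\le n$. A set $S\subseteq V(G)$ is a determining set for $G$ if the only automorphism of $G$ fixing every vertex of $S$ is the identity; $\det(G)$ is the minimum size of a determining set. Two vertices are twins if they have the same open neighborhood; $G$ is twin-free if it has no pair of distinct twin vertices. *)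

(* Defs.v *)
From mathcomp Require Import all_boot all_fingroup.
Set Implicit Arguments. Unset Strict Implicit. Unset Printing Implicit Defensive.

(* A simple graph on a finite vertex type T is a symmetric irreflexive e : rel T. *)

Definition is_aut (T : finType) (e : rel T) (g : {perm T}) : bool :=
  [forall x, forall y, e (g x) (g y) == e x y].

Definition determining (T : finType) (e : rel T) (S : {set T}) : bool :=
  [forall g : {perm T}, is_aut e g ==> [forall x in S, g x == x] ==> (g == 1%g)].

(* det(G): minimum size of a determining set ([set: T] is always determining). *)
Definition det_num (T : finType) (e : rel T) : nat :=
  #|[arg min_(S < [set: T] | determining e S) #|S|]|.

Definition twin_free (T : finType) (e : rel T) : Prop :=
  forall x y, (forall z, e x z = e y z) -> x = y.

Definition has_isolated (T : finType) (e : rel T) : bool :=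
  [exists x, [forall y, ~~ e x y]].

(* Generalized Mycielskian mu_t(G): vertices None = w, Some (s, v) = u_v^s
   with s in {0..t}.  *)
Definition myc_rel (T : finType) (e : rel T) (t : nat) :
  rel (option ('I_t.+1 * T)) :=
  fun x y =>
    match x, y with
    | Some (s, v), Some (s', v') =>
        e v v' && [|| ((s : nat) == 0) && ((s' : nat) == 0),
                      (s : nat).+1 == s' | (s' : nat).+1 == s]
    | Some (s, _), None => (s : nat) == t
    | None, Some (s, _) => (s : nat) == t
    | None, None => false
    end.
Arguments myc_rel {T} e t _ _.

(* Main.v *)
Require Import Defs.
From mathcomp Require Import all_boot all_fingroup zify.
Set Implicit Arguments. Unset Strict Implicit. Unset Printing Implicit Defensive.

Lemma autE (U : finType) (R : rel U) (g : {perm U}) :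
  is_aut R g -> forall x y, R (g x) (g y) = R x y.
Proof. by move=> /forallP H x y; move/forallP: (H x) => /(_ y) /eqP. Qed.

Lemma autP (U : finType) (R : rel U) (g : {perm U}) :
  (forall x y, R (g x) (g y) = R x y) -> is_aut R g.
Proof. by move=> H; apply/forallP=> x; apply/forallP=> y; rewrite H. Qed.

Lemma aut_inv (U : finType) (R : rel U) (g : {perm U}) :
  is_aut R g -> is_aut R g^-1.
Proof.
move=> H; apply: autP => x y.
by rewrite -(autE H) !permKV.
Qed.

Lemma detP (U : finType) (R : rel U) (S : {set U}) :
  determining R S <-> (forall g : {perm U}, is_aut R g -> (forall x, x \in S -> g x = x) -> g = 1%g).
Proof.
split.
- move=> /forallP H g Ha Hf; move/implyP: (H g) => /(_ Ha) /implyP H1.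
  apply/eqP; apply: H1; apply/forall_inP=> x /Hf ->; by [].
- move=> H; apply/forallP=> g; apply/implyP=> Ha; apply/implyP=> /forall_inP Hf.
  by apply/eqP; apply: H => // x /Hf /eqP.
Qed.

Lemma det_setT (U : finType) (R : rel U) : determining R [set: U].
Proof. apply/detP=> g _ Hf; apply/permP=> x; by rewrite perm1 Hf ?inE. Qed.

Lemma det_le (U : finType) (R : rel U) (S : {set U}) :
  determining R S -> det_num R <= #|S|.
Proof.
move=> HS; rewrite /det_num; case: arg_minnP; first exact: det_setT.
by move=> S0 _ /(_ S HS).
Qed.

Lemma det_ex (U : finType) (R : rel U) :
  exists2 S : {set U}, determining R S & #|S| = det_num R.
Proof.
rewrite /det_num; case: arg_minnP; first exact: det_setT.
by move=> S0 H0 _; exists S0.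
Qed.

Lemma tperm_aut (U : finType) (R : rel U) (y1 y2 : U) :
  symmetric R -> (forall z, R y1 z = false) -> (forall z, R y2 z = false) ->
  is_aut R (tperm y1 y2).
Proof.
move=> Rs H1 H2; apply: autP => x y.
have Hl : forall a b, a \in [:: y1; y2] -> R a b = false.
  by move=> a b; rewrite !inE => /orP [] /eqP ->.
case: (tpermP y1 y2 x) => [-> | -> | /eqP ? /eqP ?].
- by rewrite !Hl ?inE ?eqxx ?orbT.
- by rewrite !Hl ?inE ?eqxx ?orbT.
case: (tpermP y1 y2 y) => [-> | -> | /eqP ? /eqP ?] //.
- by rewrite Rs (Rs x) !Hl ?inE ?eqxx ?orbT.
- by rewrite Rs (Rs x) !Hl ?inE ?eqxx ?orbT.
Qed.

Section Myc.
Variables (T : finType) (e : rel T) (t : nat).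
Hypotheses (esy : symmetric e) (eirr : irreflexive e) (etf : twin_free e) (tpos : 0 < t).

Local Notation V := (option ('I_t.+1 * T)).
Local Notation E := (myc_rel e t).

Definition lc (s r : nat) := [|| (s == 0) && (r == 0), s.+1 == r | r.+1 == s].

Lemma E_SS (s r : 'I_t.+1) a b : E (Some (s,a)) (Some (r,b)) = e a b && lc s r.
Proof. by []. Qed.
Lemma E_SN (s : 'I_t.+1) a : E (Some (s,a)) None = (s == t :> nat).
Proof. by []. Qed.
Lemma E_NS (s : 'I_t.+1) a : E None (Some (s,a)) = (s == t :> nat).
Proof. by []. Qed.
Lemma E_NN : E None None = false.
Proof. by []. Qed.

Lemma Esym : symmetric E.
Proof.
move=> [[s a]|] [[r b]|] //; rewrite !E_SS esy /lc; congr (_ && _); lia.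
Qed.

Definition isol (a : T) := [forall y, ~~ e a y].

Lemma isolP a : reflect (forall y, e a y = false) (isol a).
Proof.
apply: (iffP forallP) => H y; first by apply/negbTE.
by rewrite H.
Qed.

Lemma isol_uniq a b : isol a -> isol b -> a = b.
Proof. by move=> /isolP Ha /isolP Hb; apply: etf => z; rewrite Ha Hb. Qed.

Lemma has_isolP : reflect (exists a, isol a) (has_isolated e).
Proof. exact: existsP. Qed.

Definition liftf (s : {perm T}) (y : V) : V :=
  match y with Some (r, a) => Some (r, s a) | None => None end.

Lemma liftf_inj s : injective (liftf s).
Proof. by move=> [[r a]|] [[r' b]|] //= [-> /perm_inj ->]. Qed.

Definition liftp s : {perm V} := perm (@liftf_inj s).

Lemma liftpE s y : liftp s y = liftf s y.
Proof. by rewrite permE. Qed.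

Lemma liftp_aut s : is_aut e s -> is_aut E (liftp s).
Proof.
move=> Hs; apply: autP => [[[r a]|] [[r' b]|]]; rewrite !liftpE //=.
by rewrite (autE Hs).
Qed.

Lemma aut_isol (g : {perm T}) v : is_aut e g -> isol v -> g v = v.
Proof.
move=> Hg Hv; apply: isol_uniq => //; apply/isolP => y.
by rewrite -(permKV g y) (autE Hg); apply/isolP.
Qed.

Definition Zs : {set V} :=
  [set y : V | if y is Some (s, v) then (s < t) && isol v else false].

Lemma Zs_isol y : y \in Zs -> forall z, E y z = false.
Proof.
rewrite inE; case: y => [[s v]|] // /andP [Hs /isolP Hv] [[r b]|].
- by rewrite E_SS Hv.
- by rewrite E_SN; lia.
Qed.

Lemma lower (S' : {set V}) : determining E S' ->
  (if has_isolated e then det_num e + t - 1 else det_num e) <= #|S'|.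
Proof.
move=> HS'.
set S := [set v | [exists s, Some (s,v) \in S'] && ~~ isol v].
have HS : determining e S.
  apply/detP => sg Ha Hf.
  have Hfix : forall v, (exists s, Some (s,v) \in S') -> sg v = v.
    move=> v [s Hs]; case Hv: (isol v); first exact: aut_isol.
    by apply: Hf; rewrite inE Hv andbT; apply/existsP; exists s.
  have := (proj1 (detP E S') HS' (liftp sg) (liftp_aut Ha)).
  move=> H; have {}H := H _.
  have H1 : liftp sg = 1%g.
    apply: H => [[[s v]|]] Hin; rewrite liftpE //=.
    by rewrite Hfix //; exists s.
  apply/permP => v; rewrite perm1.
  have := congr1 (fun g : {perm V} => g (Some (ord0, v))) H1.
  by rewrite liftpE perm1 /= => [[]].
have HSle : #|S| <= #|S' :\: Zs|.
  rewrite -(card_imset S (@Some_inj _)).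
  apply: (leq_trans _ (leq_imset_card (omap snd) _)).
  apply: subset_leq_card; apply/subsetP => _ /imsetP [v Hv ->].
  move: Hv; rewrite inE => /andP [/existsP [s Hs] Hnv].
  apply/imsetP; exists (Some (s, v)) => //.
  by rewrite !inE Hs andbT negb_and Hnv orbT.
have Hdet := det_le HS.
have Hsplit := cardsID Zs S'.
case: ifP => Hiso; last by lia.
case/has_isolP: Hiso => z Hz.
have HZc : #|Zs| = t.
  have -> : Zs = (fun s => Some (s, z)) @: [set~ ord_max].
    apply/setP => [[[s v]|]]; rewrite !inE //.
    - apply/idP/imsetP.
      + move=> /andP [Hs Hv]; rewrite (isol_uniq Hv Hz); exists s => //.
        by rewrite !inE; apply/eqP => Hm; move: Hs; rewrite Hm /=; lia.
      + move=> [s' Hs' [-> ->]]; rewrite Hz andbT.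
        move: Hs'; rewrite !inE => /eqP Hne.
        have : s' != ord_max :> 'I_t.+1 by apply/eqP.
        rewrite -(inj_eq val_inj) /=; have := ltn_ord s'; lia.
    - by apply/esym/imsetP => [[? _]].
  rewrite card_imset; last by move=> a b [].
  by rewrite cardsC1 card_ord.
have HZd : #|Zs :\: S'| <= 1.
  rewrite leqNgt; apply/negP => /card_gt1P [y1 [y2 [H1 H2 Hne]]].
  move: H1 H2; rewrite !in_setD => /andP [Hn1 Z1] /andP [Hn2 Z2].
  have Ha := tperm_aut Esym (Zs_isol Z1) (Zs_isol Z2).
  have := proj1 (detP E S') HS' _ Ha.
  move=> H; have {}H := H _.
  have : tperm y1 y2 = 1%g.
    apply: H => x Hx; apply: tpermD; apply/eqP => Hq; subst x.
    - by rewrite Hx in Hn1.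
    - by rewrite Hx in Hn2.
  move/(congr1 (fun g : {perm V} => g y1)); rewrite tpermL perm1 => Heq.
  by rewrite Heq eqxx in Hne.
have := cardsID S' Zs; rewrite setIC => HZs.
lia.
Qed.

Definition lv (n : nat) : 'I_t.+1 := inord n.
Lemma lvE n : n <= t -> (lv n : nat) = n.
Proof. by move=> H; rewrite /lv inordK. Qed.

Definition Pi (x : V) := forall y, E x y ->
  exists y', [/\ ~~ E x y', y' != x & forall z, E y z -> z != x -> E y' z].

Lemma Pi_aut (g : {perm V}) x : is_aut E g -> Pi x -> Pi (g x).
Proof.
move=> Hg HP y Hy.
have Hy0 : E x (g^-1%g y) by rewrite -(autE Hg) permKV.
have [y0' [H1 H2 H3]] := HP _ Hy0.
exists (g y0'); split.
- by rewrite (autE Hg).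
- by rewrite (inj_eq perm_inj).
- move=> z Hz Hzx.
  rewrite -(permKV g z) (autE Hg); apply: H3.
  + by rewrite -(autE Hg) !permKV.
  + by apply: contra Hzx => /eqP <-; rewrite permKV.
Qed.

Lemma Pi_None : Pi None.
Proof.
move=> [[s v]|] //; rewrite E_NS => /eqP Hs.
exists (Some (lv t.-2, v)); split => //.
- by rewrite E_NS lvE; lia.
- move=> [[r c]|] //; rewrite !E_SS => /andP [Hvc Hl] _.
  rewrite Hvc /= /lc lvE; last lia.
  move: Hl; rewrite /lc Hs; have := ltn_ord r; lia.
Qed.

Lemma nbh_card (g : {perm V}) x : is_aut E g ->
  #|[set y | E (g x) y]| = #|[set y | E x y]|.
Proof.
move=> Hg.
have -> : [set y | E (g x) y] = g @: [set y | E x y].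
  apply/setP => y; rewrite inE; apply/idP/imsetP.
  - move=> H; exists (g^-1%g y); last by rewrite permKV.
    by rewrite inE -(autE Hg) permKV.
  - by move=> [y0 Hy0 ->]; rewrite (autE Hg) -inE.
by rewrite card_imset //; apply: perm_inj.
Qed.

Lemma nbh_None : #|[set y | E None y]| = #|T|.
Proof.
have -> : [set y | E None y] = (fun v => Some (ord_max, v)) @: [set: T].
  apply/setP => [[[s v]|]]; rewrite inE.
  - rewrite E_NS; apply/eqP/imsetP.
    + by move=> Hs; exists v => //; congr (Some (_, _)); apply: val_inj.
    + by move=> [v' _ [-> _]].
  - by rewrite E_NN; apply/esym/imsetP => [[]].
by rewrite card_imset ?cardsT // => a b [].
Qed.

Lemma no_Pi_lv (s : 'I_t.+1) a j k (ry rp rq : nat) :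
  e a j -> e j k -> k != a -> ry <= t -> rp <= t -> rq <= t ->
  lc s ry -> lc ry rp -> lc ry rq -> rp != s -> ~~ ((rp == t) && (rq == t)) ->
  (forall r, r <= t -> lc r rp -> lc r rq -> lc s r) -> ~ Pi (Some (s, a)).
Proof.
move=> Haj Hjk Hka Hy Hp Hq L1 L2 L3 Hps Hpq Hr HP.
have Hxy : E (Some (s,a)) (Some (lv ry, j)) by rewrite E_SS Haj lvE.
have [y' [Hn Hne Hz]] := HP _ Hxy.
have Hp' := Hz (Some (lv rp, a)).
have Hq' := Hz (Some (lv rq, k)).
rewrite !E_SS !lvE // esy Haj Hjk /= in Hp' Hq'.
have {Hp'}Hp' := Hp' L2; have {Hq'}Hq' := Hq' L3.
have Hpx : Some (lv rp, a) != Some (s, a).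
  by apply/eqP => [[/(congr1 (@nat_of_ord _))]]; rewrite lvE //; apply/eqP.
have Hqx : Some (lv rq, k) != Some (s, a).
  by apply/eqP => [[_ Hka']]; rewrite Hka' eqxx in Hka.
have {Hp' Hpx}Hp' := Hp' Hpx; have {Hq' Hqx}Hq' := Hq' Hqx.
move: Hn Hp' Hq'; clear Hz Hne; case: y' => [[r b]|].
- rewrite !E_SS !lvE // => /negP Hn /andP [Hba Hrp] /andP [_ Hrq]; apply: Hn.
  by rewrite esy Hba /=; apply: Hr => //; have := ltn_ord r; lia.
- by rewrite !E_NS !lvE // => _ /eqP Hp1 /eqP Hq1; move: Hpq; rewrite Hp1 Hq1 !eqxx.
Qed.

Lemma no_Pi (s : 'I_t.+1) a : 2 < #|[set y | E (Some (s, a)) y]| -> ~ Pi (Some (s, a)).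
Proof.
move=> Hc.
have Hs := ltn_ord s.
case: (boolP [exists j, exists k, e a j && e j k && (k != a)]).
  move=> /existsP [j /existsP [k /andP [/andP [Haj Hjk] Hka]]].
  case: (ltngtP s t) => Hst; last first.
  -
    by apply: (no_Pi_lv (ry := t.-1) (rp := t.-2) (rq := t) Haj Hjk Hka) => //;
      rewrite /lc; try lia; move=> r Hr; lia.
  - lia.
  case: (ltnP s.+1 t) => Hs1.
  - by apply: (no_Pi_lv (ry := s.+1) (rp := s.+2) (rq := s) Haj Hjk Hka) => //;
      rewrite /lc; try lia; move=> r Hr; lia.
  case: (ltnP 1 t) => Ht1.
  - by apply: (no_Pi_lv (ry := t.-2) (rp := t - 3) (rq := s) Haj Hjk Hka) => //;
      rewrite /lc; try lia; move=> r Hr; lia.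
  - by apply: (no_Pi_lv (ry := 0) (rp := 1) (rq := 0) Haj Hjk Hka) => //;
      rewrite /lc; try lia; move=> r Hr; lia.
move=> Hno _; move: Hc.
have Hnb : forall j k, e a j -> e j k -> k = a.
  move=> j k Haj Hjk; apply/eqP; apply: contraNT Hno => Hka.
  by apply/existsP; exists j; apply/existsP; exists k; rewrite Haj Hjk.
have Hun : forall j1 j2, e a j1 -> e a j2 -> j1 = j2.
  move=> j1 j2 H1 H2; apply: etf => z.
  have Hz : forall j, e a j -> e j z = (z == a).
    move=> j Hj; apply/idP/eqP => [|->]; first exact: Hnb.
    by rewrite esy.
  by rewrite (Hz _ H1) (Hz _ H2).
apply/negP; rewrite -leqNgt.
case: (pickP (e a)) => [j Hj | Hn].
- case: (eqVneq (s : nat) t) => Hst.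
  + apply: (leq_trans (subset_leq_card (B := [set Some (lv t.-1, j); None]) _)).
      apply/subsetP => [[[r c]|]]; rewrite !inE // E_SS => /andP [Hac Hl].
      rewrite (Hun _ _ Hac Hj) /=; apply/orP; left; apply/eqP.
      congr (Some (_, _)); apply: val_inj; rewrite /= lvE; last lia.
      have := ltn_ord r; move: Hl; rewrite /lc; lia.
    by rewrite cards2; case: (_ != _).
  + apply: (leq_trans (subset_leq_card (B := [set Some (lv s.-1, j); Some (lv s.+1, j)]) _)).
      apply/subsetP => [[[r c]|]]; rewrite !inE //; last by rewrite E_SN; lia.
      rewrite E_SS => /andP [Hac Hl]; rewrite (Hun _ _ Hac Hj).
      have := ltn_ord r; move: Hl; rewrite /lc => Hl Hr.
      case: (eqVneq (r : nat) s.-1) => Hr1.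
      * apply/orP; left; apply/eqP; congr (Some (_, _)); apply: val_inj.
        by rewrite /= lvE; lia.
      * apply/orP; right; apply/eqP; congr (Some (_, _)); apply: val_inj.
        by rewrite /= lvE; lia.
    by rewrite cards2; case: (_ != _).
- apply: (leq_trans (subset_leq_card (B := [set None]) _)).
    apply/subsetP => [[[r c]|]]; rewrite !inE //.
    by rewrite E_SS Hn.
  by rewrite cards1.
Qed.

Lemma fixw (g : {perm V}) : is_aut E g -> 3 <= #|T| -> g None = None.
Proof.
move=> Hg HT.
have HP := Pi_aut Hg Pi_None.
have Hc := nbh_card None Hg; rewrite nbh_None in Hc.
case Hx: (g None) => [[s a]|] //.
by exfalso; rewrite Hx in HP Hc; apply: (no_Pi (s := s) (a := a)) => //; rewrite Hc.
Qed.

Fixpoint B (k : nat) : {set V} :=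
  if k is k'.+1 then B k' :|: [set y | [exists x in B k', E x y]] else [set None].

Lemma B_None k : None \in B k.
Proof. by elim: k => [|k IH] /=; rewrite !inE ?IH. Qed.

Lemma B_aut (g : {perm V}) k : is_aut E g -> g None = None ->
  forall y, (g y \in B k) = (y \in B k).
Proof.
move=> Hg Hw; elim: k => [|k IH] y /=.
- by rewrite !inE -{1}Hw (inj_eq perm_inj).
- rewrite !inE IH; congr (_ || _); apply/existsP/existsP => [[x /andP [Hx Hxy]]|[x /andP [Hx Hxy]]].
  + exists (g^-1%g x); rewrite -IH permKV Hx /=.
    by rewrite -(autE Hg) permKV.
  + by exists (g x); rewrite IH Hx (autE Hg).
Qed.

Definition reach (s : nat) (a : T) := (s == t) || ~~ isol a.

Lemma nisolP a : reflect (exists j, e a j) (~~ isol a).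
Proof.
apply: (iffP idP).
- by move=> /forallPn [j]; rewrite negbK => H; exists j.
- by move=> [j Hj]; apply/negP => /isolP H; rewrite H in Hj.
Qed.

Lemma B_inv k y : y \in B k ->
  if y is Some (s, a) then reach s a && (t.+1 <= k + s) else true.
Proof.
elim: k y => [|k IH] y /=.
- by rewrite inE => /eqP ->.
- rewrite !inE => /orP [/IH | /existsP [x /andP [/IH Hx Hxy]]].
  + by case: y => [[s a]|] // /andP [-> H] /=; lia.
  + case: y Hxy => [[s a]|] //; case: x Hx => [[s' a']|].
    * rewrite E_SS => /andP [_ H1] /andP [Ha H2]; apply/andP; split.
        by rewrite /reach; apply/orP; right; apply/nisolP; exists a'; rewrite esy.
      move: H2; rewrite /lc; lia.
    * by rewrite E_NS => _ /eqP Hs; rewrite /reach Hs eqxx /=; lia.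
Qed.

Lemma B_rev k (s : 'I_t.+1) a : reach s a -> t.+1 <= k + s -> Some (s, a) \in B k.
Proof.
elim: k s a => [|k IH] s a Hr Hk; first by have := ltn_ord s; lia.
rewrite /= !inE; apply/orP; right; apply/existsP.
case: (eqVneq (s : nat) t) => Hst.
- by exists None; rewrite B_None E_NS Hst eqxx.
- move: Hr; rewrite /reach (negbTE Hst) /= => /nisolP [j Hj].
  exists (Some (lv s.+1, j)); apply/andP; split.
  + apply: IH; last by rewrite lvE; have := ltn_ord s; lia.
    by rewrite /reach; apply/orP; right; apply/nisolP; exists a; rewrite esy.
  + rewrite E_SS esy Hj /lc lvE /=; first lia.
    by have := ltn_ord s; lia.
Qed.

Lemma B_char k (s : 'I_t.+1) a :
  (Some (s, a) \in B k) = reach s a && (t.+1 <= k + s).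
Proof.
apply/idP/idP; first exact: B_inv.
by move=> /andP [Hr Hk]; apply: B_rev.
Qed.

Lemma level_pres (g : {perm V}) (s : 'I_t.+1) a : is_aut E g -> g None = None ->
  reach s a -> exists b, g (Some (s, a)) = Some (s, b).
Proof.
move=> Hg Hw Hr.
have Hin : forall k, (g (Some (s, a)) \in B k) = reach s a && (t.+1 <= k + s).
  by move=> k; rewrite B_aut // B_char.
case Hy: (g (Some (s, a))) => [[s' b]|].
- have H1 := Hin (t.+1 - s); rewrite Hy B_char Hr /= in H1.
  have H2 := Hin (t.+1 - s'); rewrite Hy B_char Hr /= in H2.
  have Hs := ltn_ord s; have Hs' := ltn_ord s'.
  have E1 : (s' : nat) = s.
    have T1 : (t < t.+1 - s + s) = true by apply/idP; lia.
    have T2 : (t < t.+1 - s' + s') = true by apply/idP; lia.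
    rewrite T1 in H1; rewrite T2 in H2.
    move/andP: H1 => [Hrb H1]; rewrite Hrb /= in H2.
    move: H1 H2; lia.
  by exists b; congr (Some (_, _)); apply: val_inj.
- by move: Hy; rewrite -Hw => /perm_inj.
Qed.

Lemma nonreach_pres (g : {perm V}) (s : 'I_t.+1) a : is_aut E g -> g None = None ->
  ~~ reach s a -> exists s' : 'I_t.+1, g (Some (s, a)) = Some (s', a) /\ ~~ reach s' a.
Proof.
move=> Hg Hw Hr.
have Hin := B_aut (t.+1) Hg Hw (Some (s, a)).
rewrite B_char (negbTE Hr) andFb in Hin.
case Hy: (g (Some (s, a))) Hin => [[s' b]|]; last by rewrite B_None.
rewrite B_char => /negbT; rewrite negb_and -leqNgt => /orP [Hb|]; last by lia.
exists s'.
move: Hr Hb; rewrite /reach !negb_or !negbK => /andP [_ Ha] /andP [Hs' Hb].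
by rewrite (isol_uniq Hb Ha) Ha Hs'.
Qed.

Definition Ztop : {set V} :=
  [set y : V | if y is Some (s, v) then (0 < s < t) && isol v else false].

Lemma upper (S0 : {set T}) : determining e S0 ->
  (forall g : {perm V}, is_aut E g -> g None = None) ->
  det_num E <= #|S0| + (if has_isolated e then t - 1 else 0).
Proof.
move=> HS0 Hw.
set S' := ((fun v => Some (ord0, v)) @: S0) :|: Ztop.
have Hcard : #|S'| <= #|S0| + (if has_isolated e then t - 1 else 0).
  apply: (leq_trans (leq_card_setU _ _)).
  rewrite card_imset; last by move=> a b [].
  rewrite leq_add2l.
  case: ifP => Hiso.
  - case/has_isolP: Hiso => z Hz.
    apply: (@leq_trans #|[set~ (ord_max : 'I_t.+1)] :\ ord0|).
      apply: (leq_trans (subset_leq_card (B := (fun s => Some (s, z)) @: ([set~ (ord_max : 'I_t.+1)] :\ ord0)) _) (leq_imset_card _ _)).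
      apply/subsetP => [[[s v]|]]; rewrite !inE // => /andP [/andP [Hs0 Hst] Hv].
      apply/imsetP; exists s; last by rewrite (isol_uniq Hv Hz).
      rewrite !inE -!(inj_eq val_inj) /=; apply/andP; split; lia.
    have := cardsD1 ord0 [set~ (ord_max : 'I_t.+1)].
    rewrite cardsC1 card_ord !inE.
    have -> : (ord0 != ord_max :> 'I_t.+1) by rewrite -(inj_eq val_inj) /=; lia.
    simpl; lia.
  - rewrite leqn0 cards_eq0; apply/eqP/setP => [[[s v]|]]; rewrite !inE //.
    apply/negP => /andP [_ Hv]; move/negbT: Hiso => /negP; apply.
    by apply/has_isolP; exists v.
apply: (leq_trans _ Hcard); apply: det_le; apply/detP => g Hg Hf.
have Hg0 := Hw g Hg.
have Hnr : forall (s : 'I_t.+1) a, ~~ reach s a -> g (Some (s, a)) = Some (s, a).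
  move=> s a Hr.
  have Hfix : forall s' : 'I_t.+1, 0 < s' -> ~~ reach s' a -> g (Some (s', a)) = Some (s', a).
    move=> s' Hs' Hr'; apply: Hf; rewrite !inE; apply/orP; right.
    move: Hr'; rewrite /reach negb_or negbK => /andP [Hne ->]; rewrite Hs' andbT.
    by have := ltn_ord s'; lia.
  case: (posnP s) => Hs; last exact: Hfix.
  have [s' [Hy Hr']] := nonreach_pres Hg Hg0 Hr.
  case: (posnP s') => Hs'.
  - by rewrite Hy; congr (Some (_, _)); apply: val_inj; rewrite /= Hs Hs'.
  - have H := Hfix _ Hs' Hr'.
    have H2 : g (Some (s', a)) = g (Some (s, a)) by rewrite H Hy.
    move/perm_inj: H2 => [] Heq.
    by rewrite Heq Hs in Hs'.
have Hl0 : forall a, exists b, g (Some (ord0, a)) = Some (ord0, b).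
  move=> a; case Hr: (reach (ord0 : 'I_t.+1) a); first exact: level_pres.
  by exists a; apply: Hnr; rewrite Hr.
pose f a := if g (Some (ord0, a)) is Some (_, b) then b else a.
have Hf0 : forall a, g (Some (ord0, a)) = Some (ord0, f a).
  by move=> a; rewrite /f; have [b ->] := Hl0 a.
have finj : injective f.
  move=> a b Hab; have := Hf0 a; rewrite Hab -Hf0 => /perm_inj [] //.
pose sg := perm finj.
have Hsg : forall a, sg a = f a by move=> a; rewrite permE.
have Hsga : is_aut e sg.
  apply: autP => a b; rewrite !Hsg.
  have := autE Hg (Some (ord0, a)) (Some (ord0, b)).
  by rewrite !Hf0 !E_SS /lc /= !andbT.
have Hsg1 : sg = 1%g.
  apply: (proj1 (detP e S0) HS0 sg Hsga) => v Hv.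
  have Hin : Some (ord0, v) \in S'.
    by rewrite /S' inE; apply/orP; left; apply/imsetP; exists v.
  by have := Hf _ Hin; rewrite Hf0 Hsg => [[]].
have Hlev0 : forall a, g (Some (ord0, a)) = Some (ord0, a).
  by move=> a; rewrite Hf0 -Hsg Hsg1 perm1.
have Hlev : forall n (s : 'I_t.+1), (s : nat) = n -> forall a, g (Some (s, a)) = Some (s, a).
  elim=> [|n IH] s Hs a.
  - by have -> : s = ord0 by apply: val_inj.
  - case Hr: (reach s a); last by apply: Hnr; rewrite Hr.
    have [b Hb] := level_pres Hg Hg0 Hr.
    rewrite Hb; congr (Some (_, _)); apply: etf => c.
    have Hn : n <= t by have := ltn_ord s; lia.
    have := autE Hg (Some (s, a)) (Some (lv n, c)).
    rewrite Hb (IH (lv n)) ?lvE // !E_SS /lc lvE // Hs.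
    by rewrite eqxx !orbT !andbT.
apply/permP => [[[s a]|]]; rewrite perm1 //.
exact: (Hlev _ s erefl a).
Qed.

End Myc.

Unset Implicit Arguments.
Theorem mainTheorem3 (T : finType) (e : rel T) :
  symmetric e -> irreflexive e -> twin_free e ->
  #|T| <> 1 ->
  ~ (#|T| = 2 /\ (forall x y : T, x != y -> e x y)) ->
  forall t : nat, 0 < t ->
    det_num (myc_rel e t) =
      (if has_isolated e then det_num e + t - 1 else det_num e).
Proof.
move=> esy eirr etf H1 HK2 t tpos.
have Hw : forall g : {perm option ('I_t.+1 * T)}, is_aut (myc_rel e t) g -> g None = None.
  case: (posnP #|T|) => HT0.
  - move=> g _; case Hg: (g None) => [[s a]|] //.
    by move: (fintype0 a); rewrite HT0.
  - move=> g Hg; apply: (fixw esy etf tpos Hg).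
    have H2 : #|T| <> 2.
      move=> H2; apply: HK2; split => // x y Hxy.
      apply/negPn/negP => Hn.
      have Hset : [set x; y] = [set: T].
        by apply/eqP; rewrite eqEcard subsetT cardsT cards2 Hxy H2.
      have Hxy' : x = y.
        apply: etf => z.
        have : z \in [set x; y] by rewrite Hset inE.
        rewrite !inE => /orP [] /eqP ->.
        + by rewrite eirr esy (negbTE Hn).
        + by rewrite eirr (negbTE Hn).
      by rewrite Hxy' eqxx in Hxy.
    lia.
have [S0 HS0 HS0c] := det_ex e.
have [S1 HS1 HS1c] := det_ex (myc_rel e t).
have U := upper esy etf tpos HS0 Hw.
have L := lower esy etf tpos HS1.
rewrite HS0c HS1c in U L.
by case: (has_isolated e) U L; lia.
Qed.
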